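(* Assume (A1), (A2), (A3). Then for all $x,v\in\mathbb R^d$ and every probability measure $\mu$ on $\mathbb R^d$ with finite first moment, \[H(x,v)\ge24U(x)+\lambda|x|^2+12\Big|v+\frac x2\Big|^2,\] \[\mathcal L_\mu H(x,v)\le B+L_W(6+8\lambda)\Big(\int|y|\,d\mu(y)\Big)^2-\Big(\frac34\lambda+\lambda^2\Big)|x|^2-\gamma H(x,v),\] \[\mathcal L_\mu H(x,v)\le B+\Big(\Big(\int|y|\,d\mu(y)\Big)^2-|x|^2\Big)\Big(\frac34\lambda+\lambda^2\Big)-\gamma H(x,v).\] In particular $H$ is non-negative and tends to $+\infty$ at infinity.
   Context: $U,W\in\mathcal C^1(\mathbb R^d)$. (A1): $U\ge0$ and there exist $\lambda>0$, $A\ge0$ with $\tfrac12\nabla U(x)\cdot x\ge\lambda(U(x)+|x|^2/4)-A$ for all $x$. (A2): $\nabla U$ is $L_U$-Lipschitz. (A3): $W$ even, $\nabla W$ is $L_W$-Lipschitz, $L_W<\lambda/8$. Fix $\tilde A\ge0$ with $U(x)\ge\frac\lambda6|x|^2-\tilde A$ for all $x$ (such a constant exists). Set $\gamma=\frac{\lambda}{2(\lambda+1)}$, $B=24(A+(\lambda-\gamma)\tilde A+d)$, and \[H(x,v)=24U(x)+(6(1-\gamma)+\lambda)|x|^2+12x\cdot v+12|v|^2.\] For $\mu$ with finite first moment, $\mathcal L_\mu\phi(x,v)=v\cdot\nabla_x\phi-(v+\nabla U(x)+\nabla W*\mu(x))\cdot\nabla_v\phi+\Delta_v\phi$, where $\nabla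 W*\mu(x)=\int\nabla W(x-y)\mu(dy)$. *)

(* Defs.v *)
From HB Require Import structures.
From mathcomp Require Import all_boot all_order all_algebra.
From mathcomp Require Import all_classical all_reals all_analysis.

Set Implicit Arguments.
Unset Strict Implicit.
Unset Printing Implicit Defensive.

Import Order.TTheory GRing.Theory Num.Theory.
Import numFieldNormedType.Exports.

Local Open Scope classical_set_scope.
Local Open Scope ring_scope.

Notation vec R d := 'rV[R]_d.

Section Defs.
Variables (R : realType) (d : nat).
Local Notation vec := 'rV[R]_d.

Definition dotp (u w : vec) : R := \sum_(i < d) u ord0 i * w ord0 i.
Definition enorm (u : vec) : R := Num.sqrt (dotp u u).

Definition ebasis (i : 'I_d) : vec := delta_mx ord0 i.

Definition grad (f : vec -> R) (x : vec) : vec :=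
  \row_(i < d) ('D_(ebasis i) f) x.

Definition lapl (f : vec -> R) (x : vec) : R :=
  \sum_(i < d) ('D_(ebasis i) ('D_(ebasis i) f)) x.

Definition borelRd := g_sigma_algebraType (@open vec).

Definition moment1 (mu : probability borelRd R) : R :=
  Rintegral mu setT (fun y : borelRd => enorm y).

Definition finite_moment1 (mu : probability borelRd R) : Prop :=
  mu.-integrable setT (fun y : borelRd => (enorm y)%:E).

Definition conv_grad (W : vec -> R) (mu : probability borelRd R) (x : vec) : vec :=
  \row_(i < d) Rintegral mu setT (fun y : borelRd => grad W (x - y) ord0 i).

Definition Lgen (U W : vec -> R) (mu : probability borelRd R)
    (phi : vec -> vec -> R) (x v : vec) : R :=
  dotp v (grad (fun y => phi y v) x)
  - dotp (v + grad U x + conv_grad W mu x) (grad (phi x) v)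
  + lapl (phi x) v.

Definition C1 (f : vec -> R) : Prop :=
  (forall x, differentiable f x) /\ continuous (grad f).

Definition gam (lam : R) : R := lam / (2 * (lam + 1)).

Definition Bconst (lam A At : R) : R :=
  24 * (A + (lam - gam lam) * At + d%:R).

Definition Hfun (U : vec -> R) (lam : R) (x v : vec) : R :=
  24 * U x + (6 * (1 - gam lam) + lam) * enorm x ^+ 2
  + 12 * dotp x v + 12 * enorm v ^+ 2.

End Defs.

(* Main.v *)
Require Import Defs.
From HB Require Import structures.
From mathcomp Require Import all_boot all_order all_algebra.
From mathcomp Require Import all_classical all_reals all_analysis.
From mathcomp Require Import ring lra.

Import Order.TTheory GRing.Theory Num.Theory.
Import numFieldNormedType.Exports.

Local Open Scope classical_set_scope.
Local Open Scope ring_scope.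

Set Implicit Arguments.
Unset Strict Implicit.

Section Calc.
Variables (R : realType) (d : nat).
Local Notation vec := 'rV[R]_d.

Lemma is_derive_coord (x v : vec) j : is_derive x v (fun y : vec => y ord0 j) (v ord0 j).
Proof.
have @f : {linear vec -> R}.
  by exists (fun N : vec => N ord0 j); do 2![eexists]; do ?[constructor];
     rewrite ?mxE// => ? *; rewrite ?mxE//; move=> ?; rewrite !mxE.
have -> : (fun y : vec => y ord0 j) = f by [].
apply: DeriveDef; first exact/diff_derivable/linear_differentiable/coord_continuous.
by rewrite deriveE ?diff_lin //; [exact: coord_continuous|exact/linear_differentiable/coord_continuous].
Qed.



Lemma is_derive_dotpl (x v w : vec) : is_derive x v (fun y => dotp y w) (dotp v w).
Proof.
have -> : (fun y => dotp y w) = \sum_(i < d) (w ord0 i *: (fun y : vec => y ord0 i)).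
  by rewrite fct_sumE; apply/funext => y; rewrite /dotp; apply: eq_bigr => i _; rewrite /= mulrC.
rewrite /dotp (eq_bigr (fun i => w ord0 i *: v ord0 i)); last by move=> i _; rewrite mulrC.
apply: is_derive_sum => i; apply: is_deriveZ; exact: is_derive_coord.
Qed.

Lemma dotpC (u w : vec) : dotp u w = dotp w u.
Proof. by rewrite /dotp; apply: eq_bigr => i _; rewrite mulrC. Qed.

Lemma dotp_ge0 (u : vec) : 0 <= dotp u u.
Proof. by rewrite /dotp; apply: sumr_ge0 => i _; rewrite -expr2 sqr_ge0. Qed.

Lemma enorm_sq (u : vec) : enorm u ^+ 2 = dotp u u.
Proof. by rewrite /enorm sqr_sqrtr // dotp_ge0. Qed.

Lemma is_derive_sq (x v : vec) : is_derive x v (fun y => enorm y ^+ 2) (2 * dotp x v).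
Proof.
have -> : (fun y : vec => enorm y ^+ 2) = \sum_(i < d) ((fun y : vec => y ord0 i) * (fun y : vec => y ord0 i)).
  by rewrite fct_sumE; apply/funext => y; rewrite enorm_sq /dotp.
rewrite /dotp mulr_sumr (eq_bigr (fun i => x ord0 i *: v ord0 i + x ord0 i *: v ord0 i)); last first.
  by move=> i _; rewrite mulr2n mulrDl !mul1r.
apply: is_derive_sum => i; apply: is_deriveM; exact: is_derive_coord.
Qed.

Lemma dotp_e (u : vec) i : dotp u (@ebasis R d i) = u ord0 i.
Proof.
rewrite /dotp (bigD1 i) //= big1 => [|j ji]; rewrite /ebasis mxE ?eqxx /= ?mulr1 ?addr0 //.
by case: eqP ji => [->|_ _]; rewrite ?eqxx ?mulr0.
Qed.

Lemma e_e i j : @ebasis R d i ord0 j = (i == j)%:R.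
Proof. by rewrite /ebasis mxE eqxx /= eq_sym. Qed.

Definition cc (lam : R) := 6 * (1 - gam lam) + lam.

End Calc.


Section Calc2.
Variables (R : realType) (d : nat).
Local Notation vec := 'rV[R]_d.

Lemma is_derive_Hx (U : vec -> R) lam (x v : vec) i :
  (forall x, differentiable U x) ->
  is_derive x (@ebasis R d i) (fun y => Hfun U lam y v)
    (24 * grad U x ord0 i + cc lam * (2 * x ord0 i) + 12 * v ord0 i).
Proof.
move=> dU.
have -> : (fun y => Hfun U lam y v) = (24 *: U + cc lam *: (fun y => enorm y ^+2)
    + 12 *: (fun y => dotp y v) + cst (12 * enorm v ^+ 2)).
  apply/funext => y; by rewrite /Hfun /cc /= !fctE.
have hU : is_derive x (@ebasis R d i) U ('D_(@ebasis R d i) U x) by apply: derivableP; apply: diff_derivable.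
apply: (is_derive_eq (is_deriveD (is_deriveD (is_deriveD (is_deriveZ 24 hU) (is_deriveZ (cc lam) (is_derive_sq _ _))) (is_deriveZ 12 (is_derive_dotpl _ _ _))) (is_derive_cst _ _ _))).
rewrite /grad mxE dotp_e dotpC dotp_e addr0.
by [].
Qed.

Lemma is_derive_Hv (U : vec -> R) lam (x w : vec) i :
  is_derive w (@ebasis R d i) (Hfun U lam x) (12 * x ord0 i + 24 * w ord0 i).
Proof.
have -> : (Hfun U lam x) = (cst (24 * U x + cc lam * enorm x ^+ 2) + 12 *: (fun y => dotp y x)
    + 12 *: (fun y => enorm y ^+2)).
  by apply/funext => y; rewrite /Hfun /cc /= !fctE /= dotpC.
apply: (is_derive_eq (is_deriveD (is_deriveD (is_derive_cst _ _ _) (is_deriveZ 12 (is_derive_dotpl _ _ _))) (is_deriveZ 12 (is_derive_sq _ _)))).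
rewrite add0r dotp_e dotpC dotp_e.
by change (12 * x ord0 i + 12 * (2 * w ord0 i) = 12 * x ord0 i + 24 * w ord0 i); rewrite mulrA -natrM.
Qed.

Lemma DHv (U : vec -> R) lam (x : vec) i :
  'D_(@ebasis R d i) (Hfun U lam x) = fun w => 12 * x ord0 i + 24 * w ord0 i.
Proof. by apply/funext => w; rewrite (@derive_val _ _ _ _ _ _ _ (is_derive_Hv U lam x w i)). Qed.

Lemma lapl_H (U : vec -> R) lam (x v : vec) : lapl (Hfun U lam x) v = 24 * d%:R.
Proof.
rewrite /lapl (eq_bigr (fun _ => 24)) ?sumr_const ?card_ord ?mulr_natr // => i _.
rewrite DHv.
have -> : (fun w : vec => 12 * x ord0 i + 24 * w ord0 i) = cst (12 * x ord0 i) + 24 *: (fun w : vec => w ord0 i) by [].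
rewrite (@derive_val _ _ _ _ _ _ _ (is_deriveD (is_derive_cst _ _ _) (is_deriveZ 24 (is_derive_coord _ _ _)))).
rewrite add0r e_e eqxx; exact: (mulr1 (24 : R)).
Qed.
End Calc2.


Section Geo.
Variables (R : realType) (d : nat).
Local Notation vec := 'rV[R]_d.
Implicit Types u w z : vec.

Lemma dotpDl u w z : dotp (u + w) z = dotp u z + dotp w z.
Proof. by rewrite /dotp -big_split; apply: eq_bigr => i _; rewrite mxE mulrDl. Qed.
Lemma dotpZl k u z : dotp (k *: u) z = k * dotp u z.
Proof. by rewrite /dotp mulr_sumr; apply: eq_bigr => i _; rewrite mxE mulrA. Qed.
Lemma dotpNl u z : dotp (- u) z = - dotp u z.
Proof. by rewrite /dotp -sumrN; apply: eq_bigr => i _; rewrite mxE mulNr. Qed.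
Lemma dotpDr u w z : dotp z (u + w) = dotp z u + dotp z w.
Proof. by rewrite dotpC dotpDl !(dotpC z). Qed.
Lemma dotpZr k u z : dotp z (k *: u) = k * dotp z u.
Proof. by rewrite dotpC dotpZl dotpC. Qed.
Lemma dotpNr u z : dotp z (- u) = - dotp z u.
Proof. by rewrite dotpC dotpNl dotpC. Qed.

Lemma enorm_ge0 u : 0 <= enorm u.
Proof. exact: sqrtr_ge0. Qed.

Lemma CS2 u w : dotp u w ^+ 2 <= dotp u u * dotp w w.
Proof.
set A := dotp u u; set B := dotp w w; set p := dotp u w.
have hB := dotp_ge0 w; have hA := dotp_ge0 u.
case: (ltrP 0 B) => hB0.
  have := dotp_ge0 (B *: u - p *: w).
  rewrite !(dotpDl, dotpDr, dotpNl, dotpNr, dotpZl, dotpZr) -/A -/B -/p (dotpC w u) -/p.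
  move=> h.
  have h' : 0 <= B * (A * B - p ^+ 2) by nra.
  have := h'; rewrite pmulr_rge0 //; lra.
have B0 : B = 0 by apply/eqP; rewrite eq_le hB0 hB.
have w0 : forall i, w ord0 i = 0.
  move=> i; have := B0; rewrite /B /dotp => /eqP; rewrite psumr_eq0 => [|j _]; last by rewrite -expr2 sqr_ge0.
  by move=> /allP /(_ i (mem_index_enum _)) /=; rewrite mulf_eq0 orbb => /eqP.
have -> : p = 0 by rewrite /p /dotp big1 // => i _; rewrite w0 mulr0.
by rewrite expr0n /= mulr_ge0.
Qed.

Lemma CS u w : `|dotp u w| <= enorm u * enorm w.
Proof.
rewrite /enorm -sqrtrM ?dotp_ge0 // -sqrtr_sqr.
by apply: ler_wsqrtr; apply: CS2.
Qed.

Lemma CSl u w : dotp u w <= enorm u * enorm w.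
Proof. exact: le_trans (ler_norm _) (CS u w). Qed.
Lemma CSn u w : - dotp u w <= enorm u * enorm w.
Proof. by have := CS u w; rewrite -normrN; exact: le_trans (ler_norm _). Qed.

Lemma enorm_sqE u : enorm u ^+ 2 = dotp u u.
Proof. exact: enorm_sq. Qed.

Lemma enormN u : enorm (- u) = enorm u.
Proof. by rewrite /enorm dotpNl dotpNr opprK. Qed.

Lemma enorm_tri u w : enorm (u + w) <= enorm u + enorm w.
Proof.
have h : enorm (u + w) ^+ 2 <= (enorm u + enorm w) ^+ 2.
  rewrite sqrrD !enorm_sq dotpDl !dotpDr (dotpC w u).
  have := CSl u w; lra.
have := enorm_ge0 (u + w); have := enorm_ge0 u; have := enorm_ge0 w; nra.
Qed.

Lemma H_lower (U : vec -> R) lam x v : 0 < lam ->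
  Hfun U lam x v >= 24%:R * U x + lam * enorm x ^+ 2 + 12%:R * enorm (v + (2%:R)^-1 *: x) ^+ 2.
Proof.
move=> hl.
have hD : 2 * (lam + 1) != 0 by rewrite gt_eqF //; lra.
have hg : gam lam * (2 * (lam + 1)) = lam by rewrite /gam divfK.
have g12 : gam lam <= 1/2 by nra.
rewrite /Hfun !enorm_sq !(dotpDl, dotpDr, dotpZl, dotpZr) (dotpC x v).
have := dotp_ge0 x; nra.
Qed.

Lemma H_coer (U : vec -> R) lam : 0 < lam -> (forall x, 0 <= U x) ->
  forall M : R, exists r : R, forall x v : vec,
        r < enorm x + enorm v -> M < Hfun U lam x v.
Proof.
move=> hl hU M.
have hD : 2 * (lam + 1) != 0 by rewrite gt_eqF //; lra.
have hg : gam lam * (2 * (lam + 1)) = lam by rewrite /gam divfK.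
have g12 : gam lam <= 1/2 by nra.
set K := (lam + 9) / (2 * lam).
have hK : 0 < K by rewrite /K divr_gt0 //; lra.
exists (1 + K * `|M|) => x v hr.
set a := enorm x; set b := enorm v.
have ha : 0 <= a := enorm_ge0 x; have hb : 0 <= b := enorm_ge0 v.
have hr' : 1 + K * `|M| < a + b := hr.
have hH : lam * a ^+ 2 + 3 * (a - 2 * b) ^+ 2 <= Hfun U lam x v.
  rewrite /Hfun -/a -/b.
  have := CSn x v; rewrite -/a -/b => hs.
  have := hU x; have : 0 <= a ^+ 2 by apply: sqr_ge0. nra.
have h2 : (a + b) ^+ 2 * (2 * lam) <= (lam + 9) * (lam * a ^+ 2 + 3 * (a - 2 * b) ^+ 2).
  have : 0 <= lam * (3 * a + (a - 2 * b)) ^+ 2 by apply: mulr_ge0; [lra|apply: sqr_ge0].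
  have : 0 <= lam * (a - 2 * b) ^+ 2 by apply: mulr_ge0; [lra|apply: sqr_ge0].
  have : 0 <= (a - 2 * b) ^+ 2 by apply: sqr_ge0.
  have : 0 <= lam ^+ 2 * a ^+ 2 by apply: mulr_ge0; apply: sqr_ge0.
  nra.
have h3 : (a + b) ^+ 2 <= K * Hfun U lam x v.
  rewrite /K mulrAC ler_pdivlMr; last lra.
  apply: le_trans h2 _; apply: ler_wpM2l => //; lra.
have hM : M <= `|M| by apply: ler_norm.
have hKM : 0 <= K * `|M| by apply: mulr_ge0; [lra|apply: normr_ge0].
have hab1 : 1 < a + b by lra.
have hsq : a + b < (a + b) ^+ 2.
  rewrite expr2 -{1}(mulr1 (a + b)) ltr_pM2l //; lra.
have : (1 + K * `|M|) < (a + b) ^+ 2 by lra.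
move=> h4.
have : K * M <= K * `|M| by rewrite ler_pM2l.
move=> h5.
have : K * M < K * Hfun U lam x v by lra.
by rewrite ltr_pM2l.
Qed.
End Geo.


Section Alg.
Variable R : realFieldType.

Lemma keyQ (lam L a b m : R) : 0 < lam -> 0 <= L -> L <= lam / 8 ->
  0 <= a -> 0 <= b -> 0 <= m ->
  2*lam*a*b - 6*b^+2 - (9/4*lam + 3*lam^+2)*a^+2 + 12*a*L*(a+m) + 24*b*L*(a+m) - L*(6+8*lam)* m^+2 <= 0.
Proof.
move=> hl hL hL8 ha hb hm.
have h1 : 0 <= 2*L*(2*lam* m - 3*b)^+2 by apply: mulr_ge0; [lra|apply: sqr_ge0].
have h2 : 0 <= 6*L*(a-m)^+2 by apply: mulr_ge0; [lra|apply: sqr_ge0].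
have h3 : 0 <= lam*(3*(lam*a)^+2 - 5*(lam*a)*b + 15/4*b^+2).
  apply: mulr_ge0; first lra.
  have : 0 <= (6*(lam*a) - 5*b)^+2 by apply: sqr_ge0.
  have : 0 <= b^+2 by apply: sqr_ge0.
  nra.
have h4 : 0 <= (lam/8 - L) * (a*b) by apply: mulr_ge0; [lra|apply: mulr_ge0].
have h5 : 0 <= (lam/8 - L) * (b^+2) by apply: mulr_ge0; [lra|apply: sqr_ge0].
have h6 : 0 <= (lam/8 - L) * (a^+2) by apply: mulr_ge0; [lra|apply: sqr_ge0].
suff : lam * (2*lam*a*b - 6*b^+2 - (9/4*lam + 3*lam^+2)*a^+2 + 12*a*L*(a+m) + 24*b*L*(a+m) - L*(6+8*lam)* m^+2) <= 0 by nra.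
nra.
Qed.

Lemma alg (lam L g A At dd Ux a b m s q xF vF : R) :
  0 < lam -> g * (2 * (lam + 1)) = lam -> (0 <= L \/ (a = 0 /\ b = 0 /\ m = 0)) -> L < lam / 8 ->
  0 <= a -> 0 <= b -> 0 <= m ->
  lam * (Ux + a ^+ 2 / 4) - A <= 2^-1 * q ->
  lam / 6 * a ^+ 2 - At <= Ux ->
  s <= a * b -> - xF <= a * (L * (a + m)) -> - vF <= b * (L * (a + m)) ->
  (2 * (6 * (1 - g) + lam) - 12) * s - 12 * b ^+ 2 - 12 * q - 12 * xF - 24 * vF + 24 * dd
  <= 24 * (A + (lam - g) * At + dd) + L * (6 + 8 * lam) * m ^+ 2
     - (3 / 4 * lam + lam ^+ 2) * a ^+ 2
     - g * (24 * Ux + (6 * (1 - g) + lam) * a ^+ 2 + 12 * s + 12 * b ^+ 2).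
Proof.
move=> hl hg hL hL8 ha hb hm h1 h2 hs hxF hvF.
have g0 : 0 < g.
  have : 0 < 2 * (lam + 1) by lra.
  move=> hp; have := hg; move: hp; nra.
have g12 : g <= 1/2 by nra.
have glam : 6 * g + 5 * lam * g <= 3 * lam by nra.
have lg : 0 <= lam - g by nra.
have hq : - 12 * q <= - 24 * lam * Ux - 6 * lam * a ^+ 2 + 24 * A by lra.
have hU : - 24 * (lam - g) * Ux <= - 4 * lam * (lam - g) * a ^+ 2 + 24 * (lam - g) * At.
  have h2' : 0 <= Ux - (lam / 6 * a ^+ 2 - At) by lra.
  have := mulr_ge0 lg h2'. nra.
have hs' : 2 * lam * s <= 2 * lam * (a * b) by nra.
have hb2 : 0 <= b ^+ 2 by apply: sqr_ge0.
have hgb : (12 * g - 12) * b ^+ 2 <= - 6 * b ^+ 2 by nra.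
have ha2 : 0 <= a ^+ 2 by apply: sqr_ge0.
have hga : (6 * g + 5 * lam * g) * a ^+ 2 <= 3 * lam * a ^+ 2 by nra.
have hg2 : 0 <= g ^+ 2 * a ^+ 2 by apply: mulr_ge0; apply: sqr_ge0.
have hQ : 2*lam*a*b - 6*b^+2 - (9/4*lam + 3*lam^+2)*a^+2 + 12*a*L*(a+m) + 24*b*L*(a+m) - L*(6+8*lam)* m^+2 <= 0.
  case: hL => [hL|[-> [-> ->]]]; last by rewrite expr0n /= !(mulr0, mul0r, addr0, subr0).
  by apply: keyQ => //; lra.
nra.
Qed.
End Alg.


Section Meas.
Variables (R : realType) (d : nat).
Local Notation vec := 'rV[R]_d.
Local Notation B := (borelRd R d).
Variable mu : probability B R.

Lemma cont_meas (f : vec -> R) : continuous f -> measurable_fun setT (f : B -> R).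
Proof.
move=> /continuousP cf; apply: (measurability _ (measurable_realfun.RGenOpens.measurableE R)).
move=> _ [_ [a [b ->] <-]]; apply: sub_sigma_algebra; rewrite setTI.
by apply: cf; exact: interval_open.
Qed.

Lemma int_cst (k : R) : mu.-integrable setT (EFin \o (fun _ : B => k)).
Proof. exact: finite_measure_integrable_cst. Qed.

Lemma Rint_cst (k : R) : Rintegral mu setT (fun _ : B => k) = k.
Proof. rewrite Rintegral_cst //. have -> : fine (mu [set: B]) = 1 by rewrite (probability_setT mu). by rewrite mulr1. Qed.

Lemma Rint_sum (I : Type) (s : seq I) (h : I -> B -> R) :
  (forall i, mu.-integrable setT (EFin \o h i)) ->
  mu.-integrable setT (EFin \o (fun y => \sum_(i <- s) h i y)) /\
  Rintegral mu setT (fun y => \sum_(i <- s) h i y) = \sum_(i <- s) Rintegral mu setT (h i).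
Proof.
move=> hi; elim: s => [|i s [ih1 ih2]].
  have e : (fun y : B => \sum_(i <- [::]) h i y) = (fun _ => 0) by apply/funext => y; rewrite big_nil.
  by rewrite e big_nil; split; [exact: int_cst|exact: Rint_cst].
have e : (fun y : B => \sum_(j <- i :: s) h j y) = (fun y => h i y + \sum_(j <- s) h j y).
  by apply/funext => y; rewrite big_cons.
rewrite e big_cons; split.
  apply: eq_integrable (integrableD _ (hi i) ih1) => // y _ /=; by rewrite EFinD.
by rewrite RintegralD // ih2.
Qed.

Lemma cont_gx (G : vec -> vec) (x : vec) i : continuous G ->
  continuous (fun y : vec => G (x - y) ord0 i).
Proof.
move=> cG y.
have h1 : {for y, continuous (fun y : vec => x - y)}.
  by apply: (continuousB (f := cst x) (g := id)); [exact: cst_continuous|].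
have h2 := continuous_comp h1 (cG (x - y)).
have h3 := continuous_comp h2 (@coord_continuous R 1 d ord0 i (G (x - y))).
exact: h3.
Qed.

Lemma coord_le (v : vec) i : `|v ord0 i| <= enorm v.
Proof.
have := CS v (@ebasis R d i); rewrite dotp_e.
have -> : enorm (@ebasis R d i) = 1 by rewrite /enorm dotp_e e_e eqxx sqrtr1.
by rewrite mulr1.
Qed.

Lemma F_bound (W : vec -> R) (L : R) (x u : vec) :
  continuous (grad W) -> grad W 0 = 0 -> 0 <= L ->
  (forall z w, enorm (grad W z - grad W w) <= L * enorm (z - w)) ->
  finite_moment1 mu ->
  - dotp u (conv_grad W mu x) <= enorm u * (L * (enorm x + moment1 mu)).
Proof.
move=> cW W0 L0 hL fm.
have hgb : forall y : vec, enorm (grad W (x - y)) <= L * (enorm x + enorm y).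
  move=> y; have := hL (x - y) 0; rewrite W0 !subr0 => h.
  apply: le_trans h _; apply: ler_wpM2l => //.
  by have := enorm_tri x (- y); rewrite enormN.
set comp := fun i (y : B) => grad W (x - y) ord0 i.
have intdom : mu.-integrable setT (EFin \o (fun y : B => L * enorm x + L * enorm y)).
  eapply eq_integrable; last exact: (integrableD _ (int_cst (L * enorm x)) (integrableZl _ L fm)); first by [].
  by move=> y _ /=; rewrite EFinD EFinM.
have intcomp : forall i, mu.-integrable setT (EFin \o comp i).
  move=> i; eapply le_integrable; last exact: intdom; first by [].
    by apply/measurable_realfun.measurable_EFinP; apply: cont_meas; apply: cont_gx.
  move=> y _ /=; rewrite lee_fin.
  apply: le_trans (coord_le _ _) _; apply: le_trans (hgb y) _.
  rewrite -mulrDr ger0_norm //; apply: mulr_ge0 => //; apply: addr_ge0; exact: enorm_ge0.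
set g := fun i (y : B) => u ord0 i * comp i y.
have intg : forall i, mu.-integrable setT (EFin \o g i).
  move=> i; eapply eq_integrable; last exact: (integrableZl _ (u ord0 i) (intcomp i)); first by []; move=> y _ /=.
  by rewrite EFinM.
have [intS eqS] := Rint_sum (index_enum 'I_d) intg.
have eF : dotp u (conv_grad W mu x) = Rintegral mu setT (fun y : B => dotp u (grad W (x - y))).
  rewrite /dotp; under eq_bigr do rewrite mxE.
  rewrite (eq_bigr (fun i => Rintegral mu setT (g i))); last first.
    by move=> i _; rewrite /g RintegralZl.
  by rewrite -eqS.
have intl : mu.-integrable setT (EFin \o (fun y : B => - (enorm u * L * enorm x) + (- (enorm u * L)) * enorm y)).
  eapply eq_integrable; last exact: (integrableD _ (int_cst (- (enorm u * L * enorm x))) (integrableZl _ (- (enorm u * L)) fm)); first by [].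
  by move=> y _ /=; rewrite EFinD EFinM.
have hle : Rintegral mu setT (fun y : B => - (enorm u * L * enorm x) + (- (enorm u * L)) * enorm y)
        <= Rintegral mu setT (fun y : B => dotp u (grad W (x - y))).
  apply: le_Rintegral => //.
  move=> y _.
  have h1 := CSn u (grad W (x - y)).
  have h2 : enorm u * enorm (grad W (x - y)) <= enorm u * (L * (enorm x + enorm y)).
    by apply: ler_wpM2l => //; exact: enorm_ge0.
  lra.
have i1 : mu.-integrable setT (EFin \o (fun _ : B => - (enorm u * L * enorm x))) := int_cst _.
have i2 : mu.-integrable setT (EFin \o (fun y : B => - (enorm u * L) * enorm y)).
  by eapply eq_integrable; last exact: (integrableZl _ (- (enorm u * L)) fm); first by []; move=> y _ /=; rewrite EFinM.
rewrite RintegralD // Rint_cst RintegralZl // in hle.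
rewrite eF /moment1; lra.
Qed.
End Meas.


Section G.
Variables (R : realType) (d : nat).
Local Notation vec := 'rV[R]_d.

Lemma grad_even0 (W : vec -> R) : (forall x, differentiable W x) ->
  (forall x, W (- x) = W x) -> grad W 0 = 0.
Proof.
move=> dW hev; apply/rowP => i; rewrite !mxE.
set v := @ebasis R d i.
have h1 : 'D_v W 0 = 'D_(- v) W 0.
  rewrite /derive.
  suff -> : (fun h : R => h^-1 *: ((W \o shift 0) (h *: v) - W 0)) =
            (fun h : R => h^-1 *: ((W \o shift 0) (h *: - v) - W 0)) by [].
  apply/funext => h /=.
  by rewrite -[in LHS]hev !addr0 scalerN.
have h2 : 'D_(- v) W 0 = - 'D_v W 0 by rewrite !deriveE // linearN.
lra.
Qed.

Lemma grad_Hx (U : vec -> R) lam (x v : vec) : (forall x, differentiable U x) ->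
  grad (fun y => Hfun U lam y v) x = 24 *: grad U x + (cc lam * 2) *: x + 12 *: v.
Proof.
move=> dU; apply/rowP => i; rewrite /grad !mxE.
rewrite (@derive_val _ _ _ _ _ _ _ (is_derive_Hx lam x v i dU)).
by rewrite /grad mxE mulrA.
Qed.

Lemma grad_Hv (U : vec -> R) lam (x v : vec) :
  grad (Hfun U lam x) v = 12 *: x + 24 *: v.
Proof.
apply/rowP => i; rewrite /grad !mxE.
by rewrite (@derive_val _ _ _ _ _ _ _ (is_derive_Hv U lam x v i)).
Qed.

End G.


Section L.
Variables (R : realType) (d : nat).
Local Notation vec := 'rV[R]_d.

Lemma Lgen_eq (U W : vec -> R) (mu : probability (borelRd R d) R) lam x v :
  (forall x, differentiable U x) ->
  Lgen U W mu (Hfun U lam) x v =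
  (2 * cc lam - 12) * dotp x v - 12 * enorm v ^+ 2 - 12 * dotp (grad U x) x
  - 12 * dotp x (conv_grad W mu x) - 24 * dotp v (conv_grad W mu x) + 24 * d%:R.
Proof.
move=> dU; rewrite /Lgen grad_Hx // grad_Hv lapl_H enorm_sq.
set F := conv_grad W mu x; set G := grad U x.
rewrite !(dotpDl, dotpDr, dotpZl, dotpZr).
rewrite (dotpC v x) (dotpC v G) (dotpC F x) (dotpC F v).
ring.
Qed.

Lemma dotp_d0 (u w : vec) : d = 0%N -> dotp u w = 0.
Proof. by move=> d0; rewrite /dotp big1 // => i _; have := ltn_ord i; rewrite {2}d0. Qed.

Lemma enorm_d0 (u : vec) : d = 0%N -> enorm u = 0.
Proof. by move=> d0; rewrite /enorm dotp_d0 // sqrtr0. Qed.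

Lemma moment_d0 (mu : probability (borelRd R d) R) : d = 0%N -> moment1 mu = 0.
Proof.
move=> d0; rewrite /moment1.
have -> : (fun y : borelRd R d => enorm y) = (fun _ => 0) by apply/funext => y; rewrite enorm_d0.
exact: Rint_cst.
Qed.
End L.


Unset Implicit Arguments.

Theorem lemma2p1 (R : realType) (d : nat) (U W : vec R d -> R)
  (lam A LU LW At : R)
  (* regularity *)
  (hU : C1 U) (hW : C1 W)
  (* (A1) *)
  (hU0 : forall x, 0 <= U x) (hlam : 0 < lam) (hA : 0 <= A)
  (hA1 : forall x, (2%:R)^-1 * dotp (grad U x) x
                   >= lam * (U x + enorm x ^+ 2 / 4%:R) - A)
  (* (A2) *)
  (hA2 : forall x y, enorm (grad U x - grad U y) <= LU * enorm (x - y))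
  (* (A3) *)
  (hWeven : forall x, W (- x) = W x)
  (hA3 : forall x y, enorm (grad W x - grad W y) <= LW * enorm (x - y))
  (hLW : LW < lam / 8%:R)
  (* the constant A~ *)
  (hAt : 0 <= At)
  (hUAt : forall x, U x >= lam / 6%:R * enorm x ^+ 2 - At) :
  (forall (mu : probability (borelRd R d) R), finite_moment1 mu ->
   forall x v : vec R d,
     Hfun U lam x v >= 24%:R * U x + lam * enorm x ^+ 2
                       + 12%:R * enorm (v + (2%:R)^-1 *: x) ^+ 2
  /\ Lgen U W mu (Hfun U lam) x v
       <= Bconst d lam A At + LW * (6%:R + 8%:R * lam) * moment1 mu ^+ 2
          - (3%:R / 4%:R * lam + lam ^+ 2) * enorm x ^+ 2
          - gam lam * Hfun U lam x v
  /\ Lgen U W mu (Hfun U lam) x v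
       <= Bconst d lam A At
          + (moment1 mu ^+ 2 - enorm x ^+ 2) * (3%:R / 4%:R * lam + lam ^+ 2)
          - gam lam * Hfun U lam x v)
  /\ (forall x v : vec R d, 0 <= Hfun U lam x v)
  /\ (forall M : R, exists r : R, forall x v : vec R d,
        r < enorm x + enorm v -> M < Hfun U lam x v).
Proof.
have [dU _] := hU; have [dW cW] := hW.
have W0 := grad_even0 dW hWeven.
have hD : 2 * (lam + 1) != 0 by rewrite gt_eqF //; lra.
have hg : gam lam * (2 * (lam + 1)) = lam by rewrite /gam divfK.
split; last split.
- move=> mu fm x v.
  split; first exact: H_lower.
  set F := conv_grad W mu x.
  have ha := enorm_ge0 x; have hb := enorm_ge0 v.
  have hm : 0 <= moment1 mu by apply: Rintegral_ge0 => y _; exact: enorm_ge0.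
  have hs := CSl x v.
  have [hL [hxF hvF]] : (0 <= LW \/ (enorm x = 0 /\ enorm v = 0 /\ moment1 mu = 0)) /\
     - dotp x F <= enorm x * (LW * (enorm x + moment1 mu)) /\
     - dotp v F <= enorm v * (LW * (enorm x + moment1 mu)).
    case: (posnP d) => [d0|dpos].
      rewrite !enorm_d0 // moment_d0 // !dotp_d0 //.
      by split; [right|rewrite !mul0r oppr0; split].
    have L0 : 0 <= LW.
      have := hA3 (@ebasis R d (Ordinal dpos)) 0.
      rewrite W0 !subr0.
      have -> : enorm (@ebasis R d (Ordinal dpos)) = 1 by rewrite /enorm dotp_e e_e eqxx sqrtr1.
      have := enorm_ge0 (grad W (@ebasis R d (Ordinal dpos))); lra.
    split; first by left.
    by split; apply: F_bound.
  have := @alg R _ _ _ _ _ d%:R _ _ _ _ _ _ _ _ hlam hg hL hLW ha hb hm (hA1 x) (hUAt x) hs hxF hvF.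
  rewrite -Lgen_eq // => h2.
  have h3 : LW * (6 + 8 * lam) * moment1 mu ^+ 2 <= (3 / 4 * lam + lam ^+ 2) * moment1 mu ^+ 2.
    apply: ler_wpM2r; first exact: sqr_ge0.
    have : 0 <= (lam / 8 - LW) * (6 + 8 * lam) by apply: mulr_ge0; lra.
    nra.
  rewrite /Bconst /Hfun; split; [lra|nra].
- move=> x v; have := @H_lower R d U lam x v hlam.
  have := hU0 x; have := sqr_ge0 (enorm x); have := sqr_ge0 (enorm (v + 2^-1 *: x)).
  nra.
- exact: H_coer.
Qed.
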